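(* Let $n\ge3$, $0\le\alpha\le1$ and $m:=\lfloor n^\alpha\rfloor$. Then \[ \mathbf E\bigl(\hat L_n^{\alpha,1}\bigr)=2\,\frac{n-m}{n-1} \] and \[ \mathbf{Var}\bigl(\hat L_n^{\alpha,1}\bigr)=\frac{8(h_{n-1}-h_{m-1})(n+2m-2)}{(n-1)(n-2)}-\frac{4(n-m)(4n+m-5)}{(n-1)^2(n-2)}. \] In particular (case $\alpha=0$), $\mathbf E(L_n)=2$ and $\mathbf{Var}(L_n)=\frac{8nh_n-16n+8}{(n-1)(n-2)}$.
   Context: Kingman's $n$-coalescent ($n\ge 2$) consists of coalescent times $T_1>T_2>\cdots>T_n=0$ such that $\binom{k}{2}(T_{k-1}-T_k)$, $k=2,\dots,n$, are independent exponential random variables with mean $1$, together with an independent sequence of partitions $\pi_1=\{\{1,\dots,n\}\},\pi_2,\dots,\pi_n=\{\{1\},\dots,\{n\}\}$ of $\{1,\dots,n\}$, where $\pi_k$ has $k$ blocks and $\pi_{k-1}$ is obtained from $\pi_k$ by merging two blocks of $\pi_k$ chosen uniformly at random (independently of the past). For a leaf $i$ let $\rho(i):=\max\{k\ge1:\{i\}\notin\pi_k\}$, and $L_n:=\sum_{i=1}^nT_{\rho(i)}$. For $0\le\alpha<\beta\le1$ define $\hat L_n^{\alpha,\beta}:=\sum_{i=1}^n\bigl(T_{\rho(i)}\wedge T_{\lfloor n^\alpha\rfloor}-T_{\rho(i)}\wedge T_{\lfloor n^\beta\rfloor}\bigr)$ (the portion of the external length between levels $\lfloor n^\alpha\rfloor$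 and $\lfloor n^\beta\rfloor$); note $\hat L_n^{0,1}=L_n$. Here $h_j:=1+\frac12+\cdots+\frac1j$ is the $j$-th harmonic number, with $h_0:=0$. *)

(* Defs.v *)
From Stdlib Require Import Reals Lra Lia List.
Import ListNotations.

Definition partition := list (list nat).

(** All index pairs (i,j) with i < j < k: the unordered pairs of blocks. *)
Definition pairs (k : nat) : list (nat * nat) :=
  flat_map (fun j => map (fun i => (i, j)) (seq 0 j)) (seq 0 k).

Definition merge (p : partition) (i j : nat) : partition :=
  (nth i p nil ++ nth j p nil)
    :: map snd (filter (fun q => negb (Nat.eqb (fst q) i || Nat.eqb (fst q) j))
                       (combine (seq 0 (length p)) p)).

Definition singleton_in (i : nat) (p : partition) : bool :=
  existsb (fun b => match b with [x] => Nat.eqb x i | _ => false end) p.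

(** rho(i) = max { k >= 1 : {i} not in pi_k }, where the history H is the
    list [pi_1; pi_2; ...; pi_n], i.e. pi_k = nth (k-1) H. *)
Definition rho (n : nat) (H : list partition) (i : nat) : nat :=
  fold_left (fun acc k => if singleton_in i (nth (k - 1) H nil) then acc else k)
            (seq 1 n) 0%nat.

Open Scope R_scope.

(** Expectation over the random partition chain: starting from
    pi_n = {{1},...,{n}}, at each step two blocks are merged, the pair being
    chosen uniformly among the C(k,2) pairs of blocks.  [F] is evaluated on the
    whole history [pi_1; ...; pi_n] and averaged with the exact probabilities. *)
Fixpoint chain_avg (fuel : nat) (p : partition) (hist : list partition)
         (F : list partition -> R) : R :=
  match fuel with
  | O => F (p :: hist)
  | S f =>
      fold_right Rplus 0
        (map (fun ij => chain_avg f (merge p (fst ij) (snd ij)) (p :: hist) F)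
             (pairs (length p)))
      / INR (length (pairs (length p)))
  end.

Definition coalescent_avg (n : nat) (F : list partition -> R) : R :=
  chain_avg (n - 1) (map (fun i => [i]) (seq 1 n)) nil F.

(** [es] = [e_2; e_3; ...; e_n], independent Exp(1) variables with
    C(k,2) (T_{k-1} - T_k) = e_k, T_n = 0; hence
    T_k = sum_{j=k+1}^n e_j / C(j,2). *)
Definition T (n : nat) (es : list R) (k : nat) : R :=
  fold_right Rplus 0
    (map (fun j => nth (j - 2) es 0 / (INR j * INR (j - 1) / 2))
         (seq (k + 1) (n - k))).

Definition nfloor (x : R) : nat := Z.to_nat (up x - 1).

Definition Lext (n : nat) (H : list partition) (es : list R) : R :=
  fold_right Rplus 0 (map (fun i => T n es (rho n H i)) (seq 1 n)).

Definition Lhat (n : nat) (alpha beta : R) (H : list partition) (es : list R) : R :=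
  let ma := nfloor (Rpower (INR n) alpha) in
  let mb := nfloor (Rpower (INR n) beta) in
  fold_right Rplus 0
    (map (fun i => Rmin (T n es (rho n H i)) (T n es ma)
                   - Rmin (T n es (rho n H i)) (T n es mb))
         (seq 1 n)).

Fixpoint harm (j : nat) : R :=
  match j with
  | O => 0
  | S j' => harm j' + / INR (S j')
  end.

Definition exp_integral (h : R -> R) (l : R) : Prop :=
  forall eps, 0 < eps ->
    exists M0, forall M, M0 <= M ->
      exists pr : Riemann_integrable (fun x => exp (- x) * h x) 0 M,
        Rabs (RiemannInt pr - l) < eps.

(** [exp_expect d g l] : E[g(X_1,...,X_d)] = l for X_1..X_d i.i.d. Exp(1),
    computed as an iterated integral (Fubini/Tonelli). *)
Fixpoint exp_expect (d : nat) (g : list R -> R) (l : R) : Prop :=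
  match d with
  | O => g nil = l
  | S d' => exists inner : R -> R,
      (forall x, 0 <= x -> exp_expect d' (fun xs => g (x :: xs)) (inner x))
      /\ exp_integral inner l
  end.

(* Main.v *)
Require Import Defs.
From Stdlib Require Import Reals List.
From Stdlib Require Import Lra Lia Psatz Permutation Bool ZArith.
Import ListNotations.
Open Scope R_scope.

Lemma cont_integrand a b c x : continuity_pt (fun x => exp (- x) * (a + b * x + c * x ^ 2)) x.
Proof. reg. Qed.

Lemma deriv_prim a b c x :
  derivable_pt_lim (fun x => - exp (- x) * (a + b + 2 * c + (b + 2 * c) * x + c * x ^ 2)) x
    (exp (- x) * (a + b * x + c * x ^ 2)).
Proof.
  assert (H1 : derivable_pt_lim (fun x => - exp (- x)) x (exp (- x))).
  { assert (H := derivable_pt_lim_comp (fun x => - x) exp x (-1) (exp (- x))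
           (derivable_pt_lim_opp _ _ _ (derivable_pt_lim_id x)) (derivable_pt_lim_exp (- x))).
    assert (H' := derivable_pt_lim_opp _ _ _ H). unfold comp, opp_fct in H'.
    replace (exp (-x)) with (- (exp (- x) * -1)) by ring. exact H'. }
  assert (H2 : derivable_pt_lim (fun x => a + b + 2 * c + (b + 2 * c) * x + c * x ^ 2) x
              (0 + (b + 2 * c) * 1 + c * (INR 2 * x ^ (2 - 1)))).
  { apply derivable_pt_lim_plus. apply derivable_pt_lim_plus.
    apply derivable_pt_lim_const.
    apply derivable_pt_lim_scal. apply derivable_pt_lim_id.
    apply derivable_pt_lim_scal. apply derivable_pt_lim_pow. }
  assert (H := derivable_pt_lim_mult _ _ _ _ _ H1 H2). unfold mult_fct in H.
  replace (exp (- x) * (a + b * x + c * x ^ 2)) with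
    (exp (- x) * (a + b + 2 * c + (b + 2 * c) * x + c * x ^ 2) +
     - exp (- x) * (0 + (b + 2 * c) * 1 + c * (INR 2 * x ^ (2 - 1)))) by (simpl; ring).
  exact H.
Qed.

Lemma ftc (f F : R -> R) (a b : R) (H : a <= b) (pr : Riemann_integrable f a b)
  (Hc : forall x, a <= x <= b -> continuity_pt f x) (Ha : antiderivative f F a b) :
  RiemannInt pr = F b - F a.
Proof.
  rewrite (RiemannInt_P20 H (FTC_P1 H Hc) pr).
  assert (H1 := RiemannInt_P29 H Hc).
  elim (antiderivative_Ucte f _ _ _ _ H1 Ha); intros C H3; repeat rewrite H3;
    [ ring | split; [ right; reflexivity | assumption ] | split; [ assumption | right; reflexivity ] ].
Qed.

Lemma exp_ge_cube M : 0 <= M -> (M / 3) ^ 3 <= exp M.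
Proof.
  intros HM.
  assert (E : exp M = exp (M/3) ^ 3).
  { simpl. rewrite Rmult_1_r, <- !exp_plus. f_equal. field. }
  rewrite E. apply pow_incr. split. lra.
  assert (H := exp_ineq1_le (M/3)). lra.
Qed.

Lemma exp_int_quad a b c :
  exp_integral (fun x => a + b * x + c * x ^ 2) (a + b + 2 * c).
Proof.
  intros eps Heps.
  set (K := Rabs (a + b + 2 * c) + Rabs (b + 2 * c) + Rabs c).
  assert (HK : 0 <= K) by (unfold K; pose proof (Rabs_pos (a+b+2*c)); pose proof (Rabs_pos (b+2*c)); pose proof (Rabs_pos c); lra).
  exists (1 + 27 * K / eps). intros M HM.
  assert (HM1 : 1 <= M).
  { assert (0 <= 27 * K / eps) by (unfold Rdiv; apply Rmult_le_pos; [lra| apply Rlt_le, Rinv_0_lt_compat; lra]). lra. }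
  assert (HM0 : 0 <= M) by lra.
  exists (@continuity_implies_RiemannInt (fun x => exp (- x) * (a + b * x + c * x ^ 2)) 0 M HM0 (fun x _ => cont_integrand a b c x)).
  set (F := fun x => - exp (- x) * (a + b + 2 * c + (b + 2 * c) * x + c * x ^ 2)).
  rewrite (ftc _ F 0 M HM0 _ (fun x _ => cont_integrand a b c x)).
  2:{ split; [|exact HM0]. intros x _. exists (exist _ _ (deriv_prim a b c x)). reflexivity. }
  unfold F. rewrite Ropp_0, exp_0.
  set (q := a + b + 2 * c + (b + 2 * c) * M + c * M ^ 2).
  match goal with |- Rabs ?X < _ => replace X with (- (exp (- M) * q)) by (simpl; ring) end.
  rewrite Rabs_Ropp, Rabs_mult, (Rabs_right (exp (- M))) by (apply Rle_ge, Rlt_le, exp_pos).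
  assert (Hq : Rabs q <= K * M ^ 2).
  { unfold q, K. eapply Rle_trans. apply Rabs_triang. eapply Rle_trans.
    apply Rplus_le_compat_r. apply Rabs_triang. rewrite !Rabs_mult.
    rewrite (Rabs_right M) by lra. rewrite (Rabs_right (M^2)) by (apply Rle_ge; apply pow_le; lra).
    pose proof (Rabs_pos (a+b+2*c)); pose proof (Rabs_pos (b+2*c)); pose proof (Rabs_pos c).
    assert (M <= M * M) by nra. assert (1 <= M * M) by nra.
    simpl. rewrite !Rmult_1_r. nra. }
  assert (He := exp_ge_cube M HM0).
  assert (Hinv : exp (- M) * exp M = 1) by (rewrite <- exp_plus; replace (-M + M) with 0 by ring; apply exp_0).
  assert (Hep : 0 < exp (- M)) by apply exp_pos.
  assert (H27 : 27 * K < eps * M).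
  { assert (27 * K / eps < M) by lra.
    apply (Rmult_lt_compat_l eps) in H. unfold Rdiv in H.
    replace (eps * (27 * K * / eps)) with (27 * K) in H by (field; lra). lra. lra. }
  assert (H3 : exp (- M) * (M / 3) ^ 3 <= 1).
  { rewrite <- Hinv. apply Rmult_le_compat_l; lra. }
  assert (exp (- M) * Rabs q <= exp (- M) * (K * M ^ 2)) by (apply Rmult_le_compat_l; lra).
  (* exp(-M) K M^2 * M = 27 K * exp(-M) (M/3)^3 <= 27 K < eps M *)
  assert (exp (- M) * (K * M ^ 2) * M <= 27 * K).
  { replace (exp (- M) * (K * M ^ 2) * M) with (27 * K * (exp (- M) * (M / 3) ^ 3)) by (simpl; field).
    replace (27 * K) with (27 * K * 1) at 2 by ring. apply Rmult_le_compat_l; lra. }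
  assert (exp (- M) * (K * M ^ 2) < eps) by nra.
  lra.
Qed.

Fixpoint sig (f : nat -> R) (d : nat) : R :=
  match d with O => 0 | S d' => sig f d' + f d' end.

Lemma sig_ext f g d : (forall i, (i < d)%nat -> f i = g i) -> sig f d = sig g d.
Proof. induction d; intros H; simpl; auto. rewrite IHd, H; auto. Qed.

Lemma sig_plus f g d : sig (fun i => f i + g i) d = sig f d + sig g d.
Proof. induction d; simpl; [ring|rewrite IHd; ring]. Qed.

Lemma sig_scal r f d : sig (fun i => r * f i) d = r * sig f d.
Proof. induction d; simpl; [ring|rewrite IHd; ring]. Qed.

Lemma sig_zero d : sig (fun _ => 0) d = 0.
Proof. induction d; simpl; [ring|rewrite IHd; ring]. Qed.

Lemma sig_shift f d : sig f (S d) = f 0%nat + sig (fun i => f (S i)) d.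
Proof. induction d; simpl in *; [ring|rewrite IHd; ring]. Qed.

Lemma sig_swap (F : nat -> nat -> R) d e :
  sig (fun i => sig (fun j => F i j) e) d = sig (fun j => sig (fun i => F i j) d) e.
Proof.
  induction d; simpl. rewrite sig_zero; auto.
  rewrite IHd, <- sig_plus. auto.
Qed.

Definition evalQ d c (b : nat -> R) (A : nat -> nat -> R) (xs : list R) : R :=
  c + sig (fun i => b i * nth i xs 0) d
    + sig (fun i => sig (fun j => A i j * nth i xs 0 * nth j xs 0) d) d.

Definition EQ d c (b : nat -> R) (A : nat -> nat -> R) : R :=
  c + sig b d + sig (fun i => sig (fun j => A i j) d) d + sig (fun i => A i i) d.

Lemma sig2_shift (F : nat -> nat -> R) d :
  sig (fun i => sig (fun j => F i j) (S d)) (S d) =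
  F 0%nat 0%nat + sig (fun j => F 0%nat (S j)) d + sig (fun i => F (S i) 0%nat) d
  + sig (fun i => sig (fun j => F (S i) (S j)) d) d.
Proof.
  rewrite sig_shift. rewrite sig_shift.
  rewrite (sig_ext (fun i => sig (fun j => F (S i) j) (S d))
            (fun i => F (S i) 0%nat + sig (fun j => F (S i) (S j)) d)) by (intros; apply sig_shift).
  rewrite sig_plus. ring.
Qed.

Lemma ee_quad d : forall c b A (g : list R -> R),
  (forall xs, length xs = d -> Forall (Rle 0) xs -> g xs = evalQ d c b A xs) ->
  exp_expect d g (EQ d c b A).
Proof.
  induction d; intros c b A g Hg.
  - simpl. rewrite Hg by auto. unfold evalQ, EQ. simpl. ring.
  - set (a0 := c + sig (fun i => b (S i)) d + sig (fun i => sig (fun j => A (S i) (S j)) d) d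
               + sig (fun i => A (S i) (S i)) d).
    set (a1 := b 0%nat + sig (fun i => A 0%nat (S i) + A (S i) 0%nat) d).
    set (a2 := A 0%nat 0%nat).
    exists (fun x => a0 + a1 * x + a2 * x ^ 2). split.
    + intros x Hx.
      set (c' := c + b 0%nat * x + A 0%nat 0%nat * x ^ 2).
      set (b' := fun i => b (S i) + (A 0%nat (S i) + A (S i) 0%nat) * x).
      set (A' := fun i j => A (S i) (S j)).
      replace (a0 + a1 * x + a2 * x ^ 2) with (EQ d c' b' A').
      2:{ unfold EQ, a0, a1, a2, c', b', A'.
          rewrite sig_plus.
          rewrite (sig_ext (fun i => (A 0%nat (S i) + A (S i) 0%nat) * x)
                     (fun i => x * (A 0%nat (S i) + A (S i) 0%nat))) by (intros; ring).
          rewrite sig_scal. ring. }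
      apply IHd. intros xs Hl Hf. rewrite Hg by (simpl; auto).
      unfold evalQ. rewrite sig_shift, sig2_shift. simpl nth.
      unfold c', b', A'.
      rewrite (sig_ext (fun i => (b (S i) + (A 0%nat (S i) + A (S i) 0%nat) * x) * nth i xs 0)
                 (fun i => b (S i) * nth i xs 0 + (x * (A 0%nat (S i) * nth i xs 0) + x * (A (S i) 0%nat * nth i xs 0)))) by (intros; ring).
      rewrite !sig_plus, !sig_scal.
      rewrite (sig_ext (fun j => A 0%nat (S j) * x * nth j xs 0) (fun j => x * (A 0%nat (S j) * nth j xs 0))) by (intros; ring).
      rewrite (sig_ext (fun i => A (S i) 0%nat * nth i xs 0 * x) (fun i => x * (A (S i) 0%nat * nth i xs 0))) by (intros; ring).
      rewrite !sig_scal. ring.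
    + replace (EQ (S d) c b A) with (a0 + a1 + 2 * a2).
      * apply exp_int_quad.
      * unfold EQ, a0, a1, a2. rewrite sig2_shift, !sig_shift, sig_plus. ring.
Qed.

Definition sumR (l : list R) : R := fold_right Rplus 0 l.

Lemma sumR_app l1 l2 : sumR (l1 ++ l2) = sumR l1 + sumR l2.
Proof. induction l1; simpl; [ring| unfold sumR in *; simpl; rewrite IHl1; ring]. Qed.

Lemma sumR_perm l1 l2 : Permutation l1 l2 -> sumR l1 = sumR l2.
Proof. induction 1; unfold sumR in *; simpl; try lra. Qed.

Lemma sumR_map_seq f k : sumR (map f (seq 0 k)) = sig f k.
Proof.
  induction k; auto. rewrite seq_S, map_app, sumR_app, IHk. simpl. unfold sumR; simpl. ring.
Qed.

Lemma sumR_map_nth {T} (f : T -> R) (l : list T) d :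
  sumR (map f l) = sig (fun a => f (nth a l d)) (length l).
Proof.
  induction l; auto. simpl length. rewrite sig_shift. simpl. unfold sumR in *; simpl. rewrite IHl. auto.
Qed.

Lemma sumR_map_ext {T} (f g : T -> R) l : (forall x, In x l -> f x = g x) -> sumR (map f l) = sumR (map g l).
Proof. intros H. f_equal. apply map_ext_in. auto. Qed.

Lemma sumR_lin {T} (f g : T -> R) r s l :
  sumR (map (fun x => r * f x + s * g x) l) = r * sumR (map f l) + s * sumR (map g l).
Proof. induction l; unfold sumR in *; simpl; [ring| rewrite IHl; ring]. Qed.

Lemma sumR_const {T} (c : R) (l : list T) : sumR (map (fun _ => c) l) = c * INR (length l).
Proof. induction l; unfold sumR in *; simpl length; [simpl; ring| rewrite S_INR; simpl; rewrite IHl; ring]. Qed.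

Lemma sumR_zero {T} (l : list T) : sumR (map (fun _ => 0) l) = 0.
Proof. induction l; unfold sumR in *; simpl; auto. rewrite IHl; ring. Qed.

Lemma sumR_swap {T U} (F : T -> U -> R) l1 l2 :
  sumR (map (fun x => sumR (map (fun y => F x y) l2)) l1) =
  sumR (map (fun y => sumR (map (fun x => F x y) l1)) l2).
Proof.
  induction l1; simpl.
  - rewrite sumR_zero. auto.
  - unfold sumR at 1. simpl. fold (sumR (map (fun x => sumR (map (fun y => F x y) l2)) l1)).
    rewrite IHl1.
    transitivity (sumR (map (fun y => 1 * F a y + 1 * sumR (map (fun x => F x y) l1)) l2)).
    + rewrite sumR_lin, !Rmult_1_l. reflexivity.
    + apply sumR_map_ext. intros. unfold sumR; simpl. ring.
Qed.

Lemma pairs_S k : pairs (S k) = pairs k ++ map (fun i => (i, k)) (seq 0 k).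
Proof. unfold pairs. rewrite seq_S, flat_map_app. simpl. rewrite app_nil_r. auto. Qed.

Lemma pairs_in k ij : In ij (pairs k) -> (fst ij < snd ij < k)%nat.
Proof.
  unfold pairs. rewrite in_flat_map. intros [j [Hj Hi]]. rewrite in_map_iff in Hi.
  destruct Hi as [i [<- Hi]]. apply in_seq in Hj. apply in_seq in Hi. simpl. lia.
Qed.

Lemma sum_pairs (g : nat * nat -> R) k :
  sumR (map g (pairs k)) = sig (fun b => sig (fun a => g (a, b)) b) k.
Proof.
  induction k; auto. rewrite pairs_S, map_app, sumR_app, IHk, map_map, sumR_map_seq. auto.
Qed.

Lemma pairs_len k : INR (length (pairs k)) = INR k * (INR k - 1) / 2.
Proof.
  induction k. simpl. field.
  rewrite pairs_S, length_app, plus_INR, IHk, length_map, length_seq, S_INR. field.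
Qed.

Lemma sig_const c k : sig (fun _ => c) k = c * INR k.
Proof. induction k. simpl; ring. cbn [sig]. rewrite IHk, S_INR. ring. Qed.

Lemma pair_sum1 (u : nat -> R) k :
  sig (fun b => sig (fun a => u a + u b) b) k = (INR k - 1) * sig u k.
Proof.
  induction k. simpl. ring.
  simpl sig at 1. rewrite IHk, sig_plus.
  rewrite sig_const. cbn [sig]. rewrite S_INR. ring.
Qed.

Lemma pair_sum2 (u : nat -> R) k :
  sig (fun b => sig (fun a => (u a + u b) ^ 2) b) k =
  (INR k - 2) * sig (fun a => u a ^ 2) k + (sig u k) ^ 2.
Proof.
  induction k. simpl. ring.
  cbn [sig]. rewrite IHk.
  rewrite (sig_ext (fun a => (u a + u k) ^ 2) (fun a => (u a ^ 2 + (2 * u k) * u a) + u k ^ 2)) by (intros; ring).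
  rewrite !sig_plus, sig_scal, sig_const. rewrite S_INR. ring.
Qed.

Open Scope bool_scope.

Definition rest (p : list (list nat)) (a b : nat) : list (list nat) :=
  map snd (filter (fun q => negb (Nat.eqb (fst q) a || Nat.eqb (fst q) b))
                  (combine (seq 0 (length p)) p)).

Lemma merge_eq p a b : merge p a b = (nth a p nil ++ nth b p nil) :: rest p a b.
Proof. reflexivity. Qed.

Lemma filter_perm {T} (f : T -> bool) l :
  Permutation l (filter f l ++ filter (fun x => negb (f x)) l).
Proof.
  induction l; simpl; auto. destruct (f a); simpl.
  - constructor; auto.
  - apply Permutation_cons_app; auto.
Qed.

Lemma map_snd_combine {T} (l : list T) s : map snd (combine (seq s (length l)) l) = l.
Proof. revert s; induction l; intros s; simpl; auto. rewrite IHl. auto. Qed.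

Lemma map_snd_filter_combine {T} (P : nat -> bool) (l : list T) s d :
  map snd (filter (fun q => P (fst q)) (combine (seq s (length l)) l)) =
  map (fun k => nth (k - s) l d) (filter P (seq s (length l))).
Proof.
  revert s; induction l; intros s; simpl; auto.
  destruct (P s); simpl.
  - rewrite Nat.sub_diag. f_equal. rewrite IHl. apply map_ext_in.
    intros k Hk. apply filter_In in Hk. destruct Hk as [Hk _]. apply in_seq in Hk.
    replace (k - s)%nat with (S (k - S s)) by lia. reflexivity.
  - rewrite IHl. apply map_ext_in.
    intros k Hk. apply filter_In in Hk. destruct Hk as [Hk _]. apply in_seq in Hk.
    replace (k - s)%nat with (S (k - S s)) by lia. reflexivity.
Qed.

Lemma filter_none {T} (f : T -> bool) l : (forall x, In x l -> f x = false) -> filter f l = [].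
Proof. induction l; simpl; intros H; auto. rewrite H by auto. apply IHl; auto. Qed.

Lemma filter_ab a b len : (a < b < len)%nat ->
  filter (fun k => Nat.eqb k a || Nat.eqb k b) (seq 0 len) = [a; b].
Proof.
  intros H.
  assert (Hs : seq 0 len = seq 0 a ++ a :: seq (S a) (b - S a) ++ b :: seq (S b) (len - S b)).
  { replace len with (a + (S ((b - S a) + S (len - S b))))%nat at 1 by lia.
    rewrite seq_app. simpl. f_equal. f_equal. rewrite seq_app. f_equal.
    replace (S a + (b - S a))%nat with b by lia. reflexivity. }
  rewrite Hs, filter_app. simpl. rewrite filter_app. simpl.
  rewrite !filter_none.
  - rewrite Nat.eqb_refl. simpl. rewrite Nat.eqb_refl.
    replace (Nat.eqb b a) with false by (symmetry; apply Nat.eqb_neq; lia). simpl. auto.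
  - intros x Hx. apply in_seq in Hx. apply orb_false_iff. split; apply Nat.eqb_neq; lia.
  - intros x Hx. apply in_seq in Hx. apply orb_false_iff. split; apply Nat.eqb_neq; lia.
  - intros x Hx. apply in_seq in Hx. apply orb_false_iff. split; apply Nat.eqb_neq; lia.
Qed.

Lemma merge_perm p a b : (a < b < length p)%nat ->
  Permutation p (nth a p nil :: nth b p nil :: rest p a b).
Proof.
  intros H.
  set (C := combine (seq 0 (length p)) p).
  assert (HP := filter_perm (fun q => Nat.eqb (fst q) a || Nat.eqb (fst q) b) C).
  apply (Permutation_map snd) in HP.
  unfold C in HP at 1. rewrite map_snd_combine in HP.
  rewrite map_app in HP.
  unfold C in HP. rewrite (map_snd_filter_combine (fun k => Nat.eqb k a || Nat.eqb k b) p 0 nil) in HP.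
  rewrite filter_ab in HP by auto. simpl in HP. rewrite !Nat.sub_0_r in HP.
  exact HP.
Qed.

Lemma perm_concat {T} (l1 l2 : list (list T)) : Permutation l1 l2 -> Permutation (concat l1) (concat l2).
Proof.
  induction 1; simpl; auto.
  - apply Permutation_app_head; auto.
  - rewrite !app_assoc. apply Permutation_app_tail. apply Permutation_app_comm.
  - eapply Permutation_trans; eauto.
Qed.

Definition sing_i (i : nat) (bl : list nat) : bool :=
  match bl with [x] => Nat.eqb x i | _ => false end.
Definition b2r (b : bool) : R := if b then 1 else 0.
Definition Yc (n : nat) (p : list (list nat)) : R :=
  sumR (map (fun i => b2r (singleton_in i p)) (seq 1 n)).
Definition sblock (n : nat) (bl : list nat) : R :=
  sumR (map (fun i => b2r (sing_i i bl)) (seq 1 n)).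

Lemma singleton_in_eq i p : singleton_in i p = existsb (sing_i i) p.
Proof. reflexivity. Qed.

Lemma NoDup_app_notin {T} (l1 l2 : list T) x : NoDup (l1 ++ l2) -> In x l1 -> ~ In x l2.
Proof.
  induction l1; simpl; intros H Hx; [contradiction|].
  inversion H; subst. destruct Hx as [<-|Hx].
  - intros Hin. apply H2. apply in_or_app; auto.
  - apply IHl1; auto.
Qed.

Lemma sing_i_in i bl : sing_i i bl = true -> In i bl.
Proof.
  destruct bl as [|x [|y l]]; simpl; try discriminate.
  intros H. apply Nat.eqb_eq in H. auto.
Qed.

Lemma single_count i l : NoDup (concat l) ->
  b2r (existsb (sing_i i) l) = sumR (map (fun bl => b2r (sing_i i bl)) l).
Proof.
  induction l as [|bl l IH]; simpl; intros H; auto.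
  unfold sumR; simpl; fold (sumR (map (fun bl => b2r (sing_i i bl)) l)).
  destruct (sing_i i bl) eqn:E; simpl.
  - assert (Hn : ~ In i (concat l)) by (apply (NoDup_app_notin bl); auto; apply sing_i_in; auto).
    rewrite (sumR_map_ext _ (fun _ => 0)). rewrite sumR_zero. ring.
    intros x Hx. destruct (sing_i i x) eqn:E2; auto.
    exfalso. apply Hn. apply in_concat. exists x. split; auto. apply sing_i_in; auto.
  - rewrite IH. ring. apply NoDup_app_remove_l with bl; auto.
Qed.

Lemma Yc_blocks n p : NoDup (concat p) -> Yc n p = sumR (map (sblock n) p).
Proof.
  intros H. unfold Yc, sblock.
  rewrite (sumR_map_ext _ (fun i => sumR (map (fun bl => b2r (sing_i i bl)) p))).
  - apply sumR_swap.
  - intros i _. rewrite singleton_in_eq. apply single_count; auto.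
Qed.

Lemma count01 x l : NoDup l ->
  sumR (map (fun i => b2r (Nat.eqb x i)) l) = 0 \/ sumR (map (fun i => b2r (Nat.eqb x i)) l) = 1.
Proof.
  induction l as [|y l IH]; simpl; intros H; auto.
  inversion H; subst. unfold sumR; simpl; fold (sumR (map (fun i => b2r (Nat.eqb x i)) l)).
  destruct (Nat.eqb x y) eqn:E; simpl.
  - apply Nat.eqb_eq in E; subst. right.
    rewrite (sumR_map_ext _ (fun _ => 0)). rewrite sumR_zero. ring.
    intros z Hz. destruct (Nat.eqb y z) eqn:E; auto. apply Nat.eqb_eq in E; subst. contradiction.
  - destruct IH as [-> | ->]; auto; [left|right]; ring.
Qed.

Lemma sblock01 n bl : sblock n bl = 0 \/ sblock n bl = 1.
Proof.
  unfold sblock. destruct bl as [|x [|y l]]; simpl.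
  - left. apply sumR_zero.
  - apply count01. apply seq_NoDup.
  - left. apply sumR_zero.
Qed.

Lemma sblock_sq n bl : sblock n bl ^ 2 = sblock n bl.
Proof. destruct (sblock01 n bl) as [-> | ->]; ring. Qed.

Lemma sblock_app n l1 l2 : l1 <> [] -> l2 <> [] -> sblock n (l1 ++ l2) = 0.
Proof.
  intros H1 H2. unfold sblock.
  destruct l1 as [|x [|y l]]; try congruence; destruct l2; try congruence; simpl; apply sumR_zero.
Qed.

Definition Pinv (f : nat) (p : list (list nat)) : Prop :=
  length p = S f /\ NoDup (concat p) /\ (forall bl, In bl p -> bl <> []).

Lemma Pinv_merge f p ij : Pinv (S f) p -> In ij (pairs (length p)) ->
  Pinv f (merge p (fst ij) (snd ij)).
Proof.
  intros [Hl [Hn He]] Hij. apply pairs_in in Hij. destruct ij as [a b]; simpl in *.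
  assert (HP := merge_perm p a b Hij).
  rewrite merge_eq. split; [|split].
  - apply Permutation_length in HP. simpl in *. lia.
  - apply perm_concat in HP. simpl in HP. simpl. rewrite <- app_assoc.
    eapply Permutation_NoDup; [exact HP|exact Hn].
  - intros bl [<- | Hin].
    + assert (nth a p nil <> []) by (apply He, nth_In; lia).
      destruct (nth a p nil); simpl; congruence.
    + apply He. eapply Permutation_in. symmetry. exact HP. right; right; auto.
Qed.

Lemma Yc_merge n p a b : NoDup (concat p) -> (a < b < length p)%nat ->
  (forall bl, In bl p -> bl <> []) ->
  Yc n (merge p a b) = Yc n p - sblock n (nth a p nil) - sblock n (nth b p nil).
Proof.
  intros Hn Hab He.
  assert (HP := merge_perm p a b Hab).
  assert (Hn' : NoDup (concat (merge p a b))).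
  { rewrite merge_eq. apply perm_concat in HP. simpl in HP. simpl. rewrite <- app_assoc.
    eapply Permutation_NoDup; [exact HP|exact Hn]. }
  rewrite !Yc_blocks by auto.
  rewrite (sumR_perm _ _ (Permutation_map (sblock n) HP)).
  rewrite merge_eq. unfold sumR; simpl.
  rewrite sblock_app by (apply He, nth_In; lia). ring.
Qed.

Lemma singleton_merge i p a b : (a < b < length p)%nat ->
  singleton_in i (merge p a b) = true -> singleton_in i p = true.
Proof.
  intros Hab. rewrite !singleton_in_eq. intros H.
  apply existsb_exists in H. destruct H as [bl [Hbl Hs]].
  apply existsb_exists.
  assert (HP := merge_perm p a b Hab).
  rewrite merge_eq in Hbl. destruct Hbl as [<- | Hin].
  - destruct (nth a p nil) as [|x l] eqn:Ea.
    + exists (nth b p nil). split; auto. apply nth_In; lia.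
    + destruct l; simpl in Hs.
      * destruct (nth b p nil) eqn:Eb; simpl in Hs; try discriminate.
        exists [x]. split; auto. rewrite <- Ea. apply nth_In; lia.
      * discriminate.
  - exists bl. split; auto. eapply Permutation_in. symmetry. exact HP. right; right; auto.
Qed.

Lemma chain_avg_ext_inv (Inv : nat -> list (list nat) -> list (list (list nat)) -> Prop)
  (F G : list (list (list nat)) -> R) :
  (forall f p hist ij, Inv (S f) p hist -> In ij (pairs (length p)) ->
       Inv f (merge p (fst ij) (snd ij)) (p :: hist)) ->
  (forall p hist, Inv 0%nat p hist -> F (p :: hist) = G (p :: hist)) ->
  forall f p hist, Inv f p hist -> chain_avg f p hist F = chain_avg f p hist G.
Proof.
  intros Hs H0. induction f; intros p hist Hi; simpl; auto.
  f_equal. f_equal. apply map_ext_in. intros ij Hij. apply IHf. apply Hs; auto.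
Qed.

Lemma chain_avg_lin f : forall p hist (F G : list (list (list nat)) -> R) r s,
  chain_avg f p hist (fun H => r * F H + s * G H) =
  r * chain_avg f p hist F + s * chain_avg f p hist G.
Proof.
  induction f; intros; simpl; auto.
  rewrite (map_ext _ (fun ij => r * chain_avg f (merge p (fst ij) (snd ij)) (p :: hist) F
                              + s * chain_avg f (merge p (fst ij) (snd ij)) (p :: hist) G))
    by (intros; apply IHf).
  fold (sumR (map (fun ij => r * chain_avg f (merge p (fst ij) (snd ij)) (p :: hist) F
                              + s * chain_avg f (merge p (fst ij) (snd ij)) (p :: hist) G) (pairs (length p)))).
  rewrite sumR_lin. unfold sumR, Rdiv. ring.
Qed.

Lemma chain_avg_ext f : forall p hist (F G : list (list (list nat)) -> R),
  (forall H, F H = G H) -> chain_avg f p hist F = chain_avg f p hist G.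
Proof.
  induction f; intros; simpl; auto.
  f_equal. f_equal. apply map_ext. intros; apply IHf; auto.
Qed.

Lemma chain_avg_zero f : forall p hist, chain_avg f p hist (fun _ => 0) = 0.
Proof.
  induction f; intros; simpl; auto.
  rewrite (map_ext _ (fun _ => 0)) by (intros; apply IHf).
  fold (sumR (map (fun _ : nat * nat => 0) (pairs (length p)))). rewrite sumR_zero. unfold Rdiv; ring.
Qed.

Lemma chain_avg_sig f p hist (F : nat -> list (list (list nat)) -> R) d :
  chain_avg f p hist (fun H => sig (fun i => F i H) d) = sig (fun i => chain_avg f p hist (F i)) d.
Proof.
  induction d; simpl.
  - apply chain_avg_zero.
  - rewrite <- IHd.
    rewrite <- (Rmult_1_l (chain_avg f p hist (fun H => sig (fun i => F i H) d))).
    rewrite <- (Rmult_1_l (chain_avg f p hist (F d))).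
    rewrite <- chain_avg_lin. apply chain_avg_ext. intros; ring.
Qed.

Lemma chain_avg_scal f p hist (F : list (list (list nat)) -> R) r :
  chain_avg f p hist (fun H => r * F H) = r * chain_avg f p hist F.
Proof.
  transitivity (r * chain_avg f p hist F + 0 * chain_avg f p hist F).
  - rewrite <- chain_avg_lin. apply chain_avg_ext. intros; ring.
  - ring.
Qed.

Lemma chain_avg_S f p hist F : chain_avg (S f) p hist F =
  sumR (map (fun ij => chain_avg f (merge p (fst ij) (snd ij)) (p :: hist) F) (pairs (length p)))
  / INR (length (pairs (length p))).
Proof. reflexivity. Qed.

Section Moments.
Variables n m : nat.

Definition w (k : nat) : R := if Nat.ltb m k then 2 / (INR k * (INR k - 1)) else 0.
Definition SH (H : list (list (list nat))) : R := sumR (map (fun q => w (length q) * Yc n q) H).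
Definition QH (H : list (list (list nat))) : R := sumR (map (fun q => (w (length q) * Yc n q) ^ 2) H).

Definition c1 k := (INR k - 2) / INR k.
Definition c2 k := (INR k - 2) * (INR k - 3) / (INR k * (INR k - 1)).
Definition c3 k := 2 * (INR k - 2) / (INR k * (INR k - 1)).

Fixpoint alphaC k := match k with O => 0 | S k' => w (S k') + alphaC k' * c1 (S k') end.
Fixpoint beta k := match k with O => 0 | S k' =>
   2 * w (S k') ^ 2 + 2 * w (S k') * alphaC k' * c1 (S k') + beta k' * c2 (S k') end.
Fixpoint gamma k := match k with O => 0 | S k' => beta k' * c3 (S k') + gamma k' * c1 (S k') end.

Lemma avg1 f p : Pinv (S f) p ->
  sumR (map (fun ij => Yc n (merge p (fst ij) (snd ij))) (pairs (length p))) =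
  INR (length (pairs (length p))) * (c1 (length p) * Yc n p).
Proof.
  intros [Hl [Hn He]].
  set (u := fun a => sblock n (nth a p nil)).
  assert (Hy : Yc n p = sig u (length p)) by (rewrite Yc_blocks, (sumR_map_nth _ _ nil) by auto; reflexivity).
  rewrite (sumR_map_ext _ (fun ij => Yc n p * 1 + (-1) * (u (fst ij) + u (snd ij)))).
  2:{ intros ij Hij. apply pairs_in in Hij. rewrite Yc_merge by auto. unfold u. ring. }
  rewrite sumR_lin, sumR_const, sum_pairs. simpl fst; simpl snd.
  rewrite pair_sum1, <- Hy, pairs_len, Hl. unfold c1.
  assert (INR (S (S f)) <> 0) by (apply not_0_INR; lia).
  field; auto.
Qed.

Lemma avg2 f p : Pinv (S f) p ->
  sumR (map (fun ij => Yc n (merge p (fst ij) (snd ij)) ^ 2) (pairs (length p))) =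
  INR (length (pairs (length p))) * (c2 (length p) * Yc n p ^ 2 + c3 (length p) * Yc n p).
Proof.
  intros [Hl [Hn He]].
  set (u := fun a => sblock n (nth a p nil)).
  assert (Hy : Yc n p = sig u (length p)) by (rewrite Yc_blocks, (sumR_map_nth _ _ nil) by auto; reflexivity).
  assert (Hu2 : sig (fun a => u a ^ 2) (length p) = Yc n p).
  { rewrite Hy. apply sig_ext. intros; unfold u; apply sblock_sq. }
  rewrite (sumR_map_ext _ (fun ij => 1 * (Yc n p ^ 2 * 1 + (-2 * Yc n p) * (u (fst ij) + u (snd ij)))
                                     + 1 * (u (fst ij) + u (snd ij)) ^ 2)).
  2:{ intros ij Hij. apply pairs_in in Hij. rewrite Yc_merge by auto. unfold u. ring. }
  rewrite (sumR_lin (fun ij => Yc n p ^ 2 * 1 + -2 * Yc n p * (u (fst ij) + u (snd ij)))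
                    (fun ij => (u (fst ij) + u (snd ij)) ^ 2) 1 1).
  rewrite sumR_lin, sumR_const, !sum_pairs. simpl fst; simpl snd.
  rewrite pair_sum1, pair_sum2, Hu2, <- Hy, pairs_len, Hl. unfold c2, c3.
  assert (INR (S (S f)) <> 0) by (apply not_0_INR; lia).
  assert (INR (S (S f)) - 1 <> 0) by (rewrite !S_INR; assert (0 <= INR f) by apply pos_INR; lra).
  field; auto.
Qed.

Lemma pairs_pos f p : Pinv (S f) p -> INR (length (pairs (length p))) <> 0.
Proof.
  intros [Hl _]. rewrite pairs_len, Hl. rewrite !S_INR. assert (0 <= INR f) by apply pos_INR.
  apply Rgt_not_eq. apply Rmult_gt_0_compat; [|lra]. nra.
Qed.

Lemma claim1 f : forall (p : Defs.partition) (hist : list Defs.partition) X, Pinv f p ->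
  chain_avg f p hist (fun H => SH H + X) = SH hist + X + alphaC (S f) * Yc n p.
Proof.
  induction f; intros p hist X Hp.
  - simpl. destruct Hp as [Hl _]. unfold SH; simpl. rewrite Hl. unfold sumR; simpl. ring.
  - simpl chain_avg.
    rewrite (map_ext_in _ (fun ij => (SH (p :: hist) + X) * 1 + alphaC (S f) * Yc n (merge p (fst ij) (snd ij)))).
    2:{ intros ij Hij. rewrite IHf. rewrite Rmult_1_r; reflexivity. apply Pinv_merge; auto. }
    fold (sumR (map (fun ij => (SH (p :: hist) + X) * 1 + alphaC (S f) * Yc n (merge p (fst ij) (snd ij))) (pairs (length p)))).
    rewrite sumR_lin, sumR_const, (avg1 f p Hp).
    assert (HL := pairs_pos f p Hp).
    destruct Hp as [Hl _]. rewrite Hl.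
    replace (alphaC (S (S f))) with (w (S (S f)) + alphaC (S f) * c1 (S (S f))) by reflexivity.
    unfold SH at 1. simpl map. unfold sumR at 1. simpl fold_right. rewrite Hl.
    fold (sumR (map (fun q => w (length q) * Yc n q) hist)). fold (SH hist).
    rewrite Hl in HL. field. auto.
Qed.

Lemma claim2 f : forall (p : Defs.partition) (hist : list Defs.partition) X, Pinv f p ->
  chain_avg f p hist (fun H => (SH H + X) ^ 2 + QH H) =
  (SH hist + X) ^ 2 + QH hist + 2 * (SH hist + X) * alphaC (S f) * Yc n p
  + beta (S f) * Yc n p ^ 2 + gamma (S f) * Yc n p.
Proof.
  induction f; intros p hist X Hp.
  - simpl. destruct Hp as [Hl _]. unfold SH, QH; simpl. rewrite Hl. unfold sumR; simpl. ring.
  - rewrite chain_avg_S.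
    set (Z := SH (p :: hist) + X).
    rewrite (sumR_map_ext _ (fun ij => (Z ^ 2 + QH (p :: hist)) * 1 +
         1 * ((2 * Z * alphaC (S f) + gamma (S f)) * Yc n (merge p (fst ij) (snd ij))
          + beta (S f) * Yc n (merge p (fst ij) (snd ij)) ^ 2))).
    2:{ intros ij Hij. rewrite IHf. unfold Z. ring. apply Pinv_merge; auto. }
    rewrite (sumR_lin (fun _ => 1) _ (Z ^ 2 + QH (p :: hist)) 1).
    rewrite sumR_lin, sumR_const, (avg1 f p Hp), (avg2 f p Hp).
    assert (HL := pairs_pos f p Hp).
    destruct Hp as [Hl _]. rewrite Hl in *.
    replace (alphaC (S (S f))) with (w (S (S f)) + alphaC (S f) * c1 (S (S f))) by reflexivity.
    replace (beta (S (S f))) with (2 * w (S (S f)) ^ 2 + 2 * w (S (S f)) * alphaC (S f) * c1 (S (S f))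
                                   + beta (S f) * c2 (S (S f))) by reflexivity.
    replace (gamma (S (S f))) with (beta (S f) * c3 (S (S f)) + gamma (S f) * c1 (S (S f))) by reflexivity.
    unfold Z, SH, QH. simpl map. unfold sumR. simpl fold_right. rewrite Hl.
    fold (sumR (map (fun q => w (length q) * Yc n q) hist)).
    fold (sumR (map (fun q => (w (length q) * Yc n q) ^ 2) hist)).
    field. auto.
Qed.

End Moments.

Lemma harm_S k : harm (S k) = harm k + / INR (S k).
Proof. reflexivity. Qed.

Section Closed.
Variables n m : nat.
Hypothesis Hm : (1 <= m)%nat.

Lemma below_m k : (k <= m)%nat -> alphaC m k = 0 /\ beta m k = 0 /\ gamma m k = 0.
Proof.
  induction k; intros Hk; simpl; [auto|].
  destruct IHk as [-> [-> ->]]; [lia|].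
  unfold w. replace (Nat.ltb m (S k)) with false by (symmetry; apply Nat.ltb_ge; lia).
  repeat split; ring.
Qed.

Definition T1 k := (INR k - INR m) * (INR k + INR m + 1) / 2 - (INR m + 2) * (INR k - INR m)
                   + 2 * INR m * (harm k - harm m).
Definition T2 k := (1 - INR m) * (harm (k - 1) - harm (m - 1)) + INR m * (harm k - harm m).

Definition CL k :=
  alphaC m k * INR k * (INR k - 1) = 2 * (INR k - INR m) /\
  beta m k * INR k * (INR k - 1) ^ 2 * (INR k - 2) = 8 * T1 k /\
  (beta m k + gamma m k) * INR k * (INR k - 1) = 8 * T2 k.

Lemma closed d : CL (m + d).
Proof.
  unfold CL. induction d.
  - rewrite Nat.add_0_r. destruct (below_m m (le_n m)) as [-> [-> ->]].
    unfold T1, T2. split; [ring | split; field].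
  - destruct IHd as [HA [HG HT]].
    replace (m + S d)%nat with (S (m + d)) by lia.
    assert (Hj : (1 <= m + d)%nat) by lia.
    assert (Hjm : (m < S (m + d))%nat) by lia.
    revert HA HG HT Hj Hjm. generalize (m + d)%nat. intros j HA HG HT Hj Hjm.
    assert (Hj0 : INR j <> 0) by (apply not_0_INR; lia).
    assert (Hj1 : INR j + 1 <> 0) by (assert (0 <= INR j) by apply pos_INR; lra).
    assert (Hw : w m (S j) = 2 / ((INR j + 1) * INR j)).
    { unfold w. replace (Nat.ltb m (S j)) with true by (symmetry; apply Nat.ltb_lt; lia).
      rewrite S_INR. f_equal. ring. }
    assert (Ea : alphaC m (S j) = w m (S j) + alphaC m j * c1 (S j)) by reflexivity.
    assert (Eb : beta m (S j) = 2 * w m (S j) ^ 2 + 2 * w m (S j) * alphaC m j * c1 (S j)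
                               + beta m j * c2 (S j)) by reflexivity.
    assert (Eg : gamma m (S j) = beta m j * c3 (S j) + gamma m j * c1 (S j)) by reflexivity.
    unfold c1, c2, c3 in *. rewrite Hw in Ea, Eb. rewrite !S_INR in *.
    assert (Hj2 : INR j + 1 - 1 <> 0) by lra.
    assert (HA' : alphaC m (S j) * (INR j + 1) * (INR j + 1 - 1) = 2 + alphaC m j * INR j * (INR j - 1)).
    { rewrite Ea. field; auto. }
    assert (HG' : beta m (S j) * (INR j + 1) * (INR j + 1 - 1) ^ 2 * (INR j + 1 - 2)
                  = beta m j * INR j * (INR j - 1) ^ 2 * (INR j - 2)
                    + 8 * (INR j - 1) / (INR j + 1)
                    + 4 * (alphaC m j * INR j * (INR j - 1)) * (INR j - 1) / (INR j + 1)).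
    { rewrite Eb. field; auto. }
    assert (HT' : (beta m (S j) + gamma m (S j)) * (INR j + 1) * (INR j + 1 - 1)
                  = (beta m j + gamma m j) * INR j * (INR j - 1)
                    + 8 / (INR j * (INR j + 1))
                    + 4 * (alphaC m j * INR j * (INR j - 1)) / (INR j * (INR j + 1))).
    { rewrite Eb, Eg. field; auto. }
    rewrite HA', HG', HT', HA, HG, HT.
    unfold T1, T2.
    replace (S j - 1)%nat with j by lia.
    rewrite (harm_S j), S_INR.
    replace (harm j) with (harm (j - 1) + / INR j).
    2:{ destruct j; [lia|]. rewrite harm_S. replace (S j - 1)%nat with j by lia. reflexivity. }
    split; [ring | split; field; auto].
Qed.

End Closed.

Lemma nfloor_INR k : nfloor (INR k) = k.
Proof.
  unfold nfloor. rewrite <- (tech_up (INR k) (Z.of_nat k + 1)).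
  - rewrite Z.add_simpl_r. apply Nat2Z.id.
  - rewrite plus_IZR, <- INR_IZR_INZ. simpl. lra.
  - rewrite plus_IZR, <- INR_IZR_INZ. simpl. lra.
Qed.

Lemma nfloor_bounds x k : 1 <= x -> x <= INR k -> (1 <= nfloor x <= k)%nat.
Proof.
  intros H1 H2. unfold nfloor. destruct (archimed x) as [Ha Hb].
  assert (Hu1 : (1 < up x)%Z) by (apply lt_IZR; simpl; lra).
  assert (Hu2 : (up x <= Z.of_nat k + 1)%Z).
  { apply le_IZR. rewrite plus_IZR, <- INR_IZR_INZ. simpl. lra. }
  lia.
Qed.

Lemma Rpower_bounds (k : nat) a : (1 <= k)%nat -> 0 <= a <= 1 -> 1 <= Rpower (INR k) a <= INR k.
Proof.
  intros Hk Ha. assert (H1 : 1 <= INR k) by (apply (le_INR 1); auto).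
  split.
  - rewrite <- (Rpower_O (INR k)) by lra. apply Rle_Rpower; lra.
  - rewrite <- (Rpower_1 (INR k)) at 2 by lra. apply Rle_Rpower; lra.
Qed.

Lemma fold_ge (P : nat -> bool) len : forall s a, (a <= s)%nat ->
  (a <= fold_left (fun acc k => if P k then acc else k) (seq s len) a)%nat.
Proof.
  induction len; intros s a H; simpl; [lia|].
  destruct (P s).
  - apply IHlen. lia.
  - specialize (IHlen (S s) s ltac:(lia)). lia.
Qed.

Lemma fold_lt (P : nat -> bool) j len : forall s a, (a <= s)%nat -> (a < j)%nat ->
  ((fold_left (fun acc k => if P k then acc else k) (seq s len) a < j)%nat <->
   (forall k, (s <= k < s + len)%nat -> (j <= k)%nat -> P k = true)).
Proof.
  induction len; intros s a H Hj; simpl.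
  - split; intros; [lia|auto].
  - destruct (P s) eqn:E.
    + rewrite IHlen by lia. split; intros HH k Hk1 Hk2.
      * destruct (Nat.eq_dec k s); [subst; auto|]. apply HH; lia.
      * apply HH; lia.
    + destruct (Nat.lt_ge_cases s j).
      * rewrite IHlen by lia. split; intros HH k Hk1 Hk2.
        -- destruct (Nat.eq_dec k s); [subst; lia|]. apply HH; lia.
        -- apply HH; lia.
      * split; intros HH.
        -- exfalso. pose proof (fold_ge P len (S s) s ltac:(lia)). lia.
        -- specialize (HH s ltac:(lia) ltac:(lia)). congruence.
Qed.

Section Hist.
Variable n : nat.

Definition ValidH (H : list (list (list nat))) : Prop :=
  length H = n /\ (forall t, (t < n)%nat -> length (nth t H []) = S t) /\
  (forall t x, (S t < n)%nat -> singleton_in x (nth t H []) = true -> singleton_in x (nth (S t) H []) = true).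

Lemma rho_lt H i j : ValidH H -> (1 <= j <= n)%nat ->
  Nat.ltb (rho n H i) j = singleton_in i (nth (j - 1) H []).
Proof.
  intros [Hl [Hlen Hmono]] Hj. unfold rho.
  set (P := fun k => singleton_in i (nth (k - 1) H [])).
  change (singleton_in i (nth (j - 1) H [])) with (P j).
  change (fun acc k => if singleton_in i (nth (k - 1) H []) then acc else k) with
         (fun acc k => if P k then acc else k).
  assert (HF := fold_lt P j n 1 0 ltac:(lia) ltac:(lia)).
  destruct (P j) eqn:E.
  - apply Nat.ltb_lt. apply HF. intros k Hk1 Hk2.
    replace k with (j + (k - j))%nat by lia.
    assert (Hd : (j + (k - j) <= n)%nat) by lia. revert Hd.
    induction (k - j)%nat as [|d IH]; intros Hd.
    + rewrite Nat.add_0_r; auto.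
    + unfold P in *. replace (j + S d - 1)%nat with (S (j + d - 1)) by lia.
      apply Hmono. lia. apply IH. lia.
  - apply Nat.ltb_ge. destruct (Nat.lt_ge_cases (fold_left (fun acc k => if P k then acc else k) (seq 1 n) 0%nat) j) as [Hlt|Hge]; auto.
    pose proof (proj1 HF Hlt j ltac:(lia) ltac:(lia)) as Hc. rewrite Hc in E. discriminate.
Qed.

Definition cc (es : list R) (j : nat) : R := nth (j - 2) es 0 / (INR j * INR (j - 1) / 2).

Lemma sumR_scal {T} r (f : T -> R) l : sumR (map (fun x => r * f x) l) = r * sumR (map f l).
Proof. induction l; unfold sumR in *; simpl; [ring|rewrite IHl; ring]. Qed.

Lemma sumR_le {T} (f g : T -> R) l : (forall x, In x l -> f x <= g x) -> sumR (map f l) <= sumR (map g l).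
Proof.
  induction l; intros H; unfold sumR in *; simpl; [lra|].
  apply Rplus_le_compat; auto. apply H; simpl; auto. apply IHl. intros; apply H; simpl; auto.
Qed.

Lemma sumR_map_seq_gen f s k : sumR (map f (seq s k)) = sig (fun i => f (s + i)%nat) k.
Proof.
  revert s; induction k; intros s; auto. simpl seq. rewrite sig_shift.
  unfold sumR; simpl. fold (sumR (map f (seq (S s) k))). rewrite IHk.
  rewrite Nat.add_0_r. f_equal. apply sig_ext. intros. f_equal. lia.
Qed.

Lemma nth_nonneg es i : Forall (Rle 0) es -> 0 <= nth i es 0.
Proof.
  intros H. revert i; induction H; intros i; destruct i; simpl; auto; lra.
Qed.

Lemma cc_nonneg es j : Forall (Rle 0) es -> 0 <= cc es j.
Proof.
  intros H. unfold cc. pose proof (nth_nonneg es (j - 2) H).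
  destruct j as [|[|j]].
  - simpl. replace (0 * 0 / 2) with 0 by field. unfold Rdiv. rewrite Rinv_0. lra.
  - simpl. replace (1 * 0 / 2) with 0 by field. unfold Rdiv. rewrite Rinv_0. lra.
  - apply Rmult_le_pos; auto. apply Rlt_le, Rinv_0_lt_compat.
    assert (0 < INR (S (S j))) by (apply lt_0_INR; lia).
    assert (0 < INR (S (S j) - 1)) by (apply lt_0_INR; lia). nra.
Qed.

Lemma cc_1 es : cc es 1 = 0.
Proof. unfold cc. simpl. replace (1 * 0 / 2) with 0 by field. unfold Rdiv. rewrite Rinv_0. ring. Qed.

Lemma T_ind es k : T n es k = sumR (map (fun j => b2r (Nat.ltb k j) * cc es j) (seq 1 n)).
Proof.
  unfold T. fold (sumR (map (fun j => nth (j - 2) es 0 / (INR j * INR (j - 1) / 2)) (seq (k + 1) (n - k)))).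
  destruct (Nat.le_gt_cases n k).
  - replace (n - k)%nat with 0%nat by lia. simpl.
    rewrite (sumR_map_ext _ (fun _ => 0)). rewrite sumR_zero. auto.
    intros j Hj. apply in_seq in Hj. replace (Nat.ltb k j) with false by (symmetry; apply Nat.ltb_ge; lia).
    simpl. ring.
  - replace n with (k + (n - k))%nat at 2 by lia. rewrite seq_app, map_app, sumR_app.
    rewrite (sumR_map_ext (fun j => b2r (Nat.ltb k j) * cc es j) (fun _ => 0) (seq 1 k)).
    2:{ intros j Hj. apply in_seq in Hj. replace (Nat.ltb k j) with false by (symmetry; apply Nat.ltb_ge; lia).
        simpl. ring. }
    rewrite sumR_zero, Rplus_0_l. replace (1 + k)%nat with (k + 1)%nat by lia.
    apply sumR_map_ext. intros j Hj. apply in_seq in Hj.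
    replace (Nat.ltb k j) with true by (symmetry; apply Nat.ltb_lt; lia). unfold cc; simpl. ring.
Qed.

Lemma sumR_nonneg {T} (f : T -> R) l : (forall x, In x l -> 0 <= f x) -> 0 <= sumR (map f l).
Proof.
  intros H. rewrite <- (sumR_zero l). apply sumR_le. auto.
Qed.

Lemma b2r_01 b : 0 <= b2r b <= 1.
Proof. destruct b; simpl; lra. Qed.

Lemma T_anti es k k' : Forall (Rle 0) es -> (k <= k')%nat -> T n es k' <= T n es k.
Proof.
  intros H Hk. rewrite !T_ind. apply sumR_le. intros j _.
  apply Rmult_le_compat_r. apply cc_nonneg; auto.
  destruct (Nat.ltb_spec k' j); destruct (Nat.ltb_spec k j); simpl; lra || lia.
Qed.

Lemma T_nonneg es k : Forall (Rle 0) es -> 0 <= T n es k.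
Proof.
  intros H. rewrite T_ind. apply sumR_nonneg. intros j _.
  apply Rmult_le_pos. apply b2r_01. apply cc_nonneg; auto.
Qed.

Lemma T_n es : T n es n = 0.
Proof. unfold T. rewrite Nat.sub_diag. reflexivity. Qed.

Lemma b2r_max a b j : b2r (Nat.ltb (Nat.max a b) j) = b2r (Nat.ltb b j) * b2r (Nat.ltb a j).
Proof.
  destruct (Nat.ltb_spec (Nat.max a b) j); destruct (Nat.ltb_spec b j); destruct (Nat.ltb_spec a j);
  simpl; try ring; lia.
Qed.

Lemma Lhat_term es r mm : Forall (Rle 0) es ->
  Rmin (T n es r) (T n es mm) - Rmin (T n es r) (T n es n) =
  sumR (map (fun j => b2r (Nat.ltb mm j) * b2r (Nat.ltb r j) * cc es j) (seq 1 n)).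
Proof.
  intros H. rewrite T_n. rewrite (Rmin_right _ 0) by (apply T_nonneg; auto).
  rewrite Rminus_0_r.
  replace (Rmin (T n es r) (T n es mm)) with (T n es (Nat.max r mm)).
  - rewrite T_ind. apply sumR_map_ext. intros j _. rewrite b2r_max. ring.
  - destruct (Nat.le_ge_cases r mm).
    + rewrite Nat.max_r by auto. rewrite Rmin_right; auto. apply T_anti; auto.
    + rewrite Nat.max_l by auto. rewrite Rmin_left; auto. apply T_anti; auto.
Qed.

Lemma core H es mm : ValidH H -> (1 <= n)%nat ->
  sumR (map (fun i => sumR (map (fun j => b2r (Nat.ltb mm j) * b2r (Nat.ltb (rho n H i) j) * cc es j) (seq 1 n))) (seq 1 n))
  = sig (fun idx => nth idx es 0 * (w mm (S (S idx)) * Yc n (nth (S idx) H []))) (n - 1).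
Proof.
  intros HV Hn. rewrite sumR_swap.
  rewrite (sumR_map_ext _ (fun j => (b2r (Nat.ltb mm j) * cc es j) * Yc n (nth (j - 1) H []))).
  2:{ intros j Hj. apply in_seq in Hj.
      rewrite (sumR_map_ext _ (fun i => (b2r (Nat.ltb mm j) * cc es j) * b2r (singleton_in i (nth (j - 1) H [])))).
      - rewrite sumR_scal. reflexivity.
      - intros i _. rewrite rho_lt by (auto; lia). ring. }
  replace (seq 1 n) with (1%nat :: seq 2 (n - 1)) by (replace n with (S (n - 1)) at 2 by lia; reflexivity).
  unfold sumR at 1. simpl map. simpl fold_right. rewrite cc_1.
  fold (sumR (map (fun j => b2r (Nat.ltb mm j) * cc es j * Yc n (nth (j - 1) H [])) (seq 2 (n - 1)))).
  rewrite sumR_map_seq_gen. rewrite Rmult_0_r, Rmult_0_l, Rplus_0_l.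
  apply sig_ext. intros i Hi.
  replace (2 + i - 1)%nat with (S i) by lia. replace (2 + i)%nat with (S (S i)) by lia.
  unfold cc, w. replace (S (S i) - 2)%nat with i by lia. replace (S (S i) - 1)%nat with (S i) by lia.
  assert (INR (S (S i)) <> 0) by (apply not_0_INR; lia).
  assert (INR (S i) <> 0) by (apply not_0_INR; lia).
  assert (E : INR (S (S i)) - 1 = INR (S i)) by (rewrite (S_INR (S i)); ring).
  rewrite E. destruct (Nat.ltb mm (S (S i))); simpl b2r; field; auto.
Qed.

Lemma Lhat_eq H es m alphaC : ValidH H -> Forall (Rle 0) es -> (1 <= n)%nat ->
  nfloor (Rpower (INR n) alphaC) = m ->
  Lhat n alphaC 1 H es = sig (fun idx => nth idx es 0 * (w m (S (S idx)) * Yc n (nth (S idx) H []))) (n - 1).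
Proof.
  intros HV Hes Hn Hm. unfold Lhat. rewrite Hm.
  rewrite Rpower_1 by (apply lt_0_INR; lia). rewrite nfloor_INR.
  rewrite <- core by auto.
  fold (sumR (map (fun i => Rmin (T n es (rho n H i)) (T n es m) - Rmin (T n es (rho n H i)) (T n es n)) (seq 1 n))).
  apply sumR_map_ext. intros i _. apply Lhat_term; auto.
Qed.

Lemma Lext_eq H es : ValidH H -> Forall (Rle 0) es -> (1 <= n)%nat ->
  Lext n H es = sig (fun idx => nth idx es 0 * (w 1 (S (S idx)) * Yc n (nth (S idx) H []))) (n - 1).
Proof.
  intros HV Hes Hn. unfold Lext. rewrite <- core by auto.
  fold (sumR (map (fun i => T n es (rho n H i)) (seq 1 n))).
  apply sumR_map_ext. intros i _. rewrite T_ind. apply sumR_map_ext.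
  intros j Hj. apply in_seq in Hj. destruct (Nat.eq_dec j 1).
  - subst. rewrite cc_1. ring.
  - replace (Nat.ltb 1 j) with true by (symmetry; apply Nat.ltb_lt; lia). simpl. ring.
Qed.

End Hist.

Lemma sig_sq f d : (sig f d) ^ 2 = sig (fun i => sig (fun j => f i * f j) d) d.
Proof.
  rewrite (sig_ext (fun i => sig (fun j => f i * f j) d) (fun i => f i * sig f d)).
  - rewrite (sig_ext (fun i => f i * sig f d) (fun i => sig f d * f i)) by (intros; ring).
    rewrite sig_scal. ring.
  - intros i _. rewrite <- sig_scal. reflexivity.
Qed.

Lemma chain_avg_add f p hist (F G : list (list (list nat)) -> R) :
  chain_avg f p hist (fun H => F H + G H) = chain_avg f p hist F + chain_avg f p hist G.
Proof.
  transitivity (chain_avg f p hist (fun H => 1 * F H + 1 * G H)).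
  - apply chain_avg_ext; intros; ring.
  - rewrite chain_avg_lin. ring.
Qed.

Lemma chain_evalQ f p hist d (c : list (list (list nat)) -> R) (b : list (list (list nat)) -> nat -> R)
      (A : list (list (list nat)) -> nat -> nat -> R) xs :
  chain_avg f p hist (fun H => evalQ d (c H) (b H) (A H) xs) =
  evalQ d (chain_avg f p hist c) (fun i => chain_avg f p hist (fun H => b H i))
          (fun i j => chain_avg f p hist (fun H => A H i j)) xs.
Proof.
  unfold evalQ. rewrite !chain_avg_add, !chain_avg_sig. f_equal; [f_equal|].
  - apply sig_ext. intros i _.
    rewrite Rmult_comm, <- chain_avg_scal.
    apply chain_avg_ext. intros; ring.
  - apply sig_ext. intros i _. rewrite chain_avg_sig. apply sig_ext. intros j _.
    rewrite (Rmult_assoc _ (nth i xs 0)), Rmult_comm.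
    rewrite <- chain_avg_scal. apply chain_avg_ext. intros; ring.
Qed.

Lemma chain_EQ f p hist d (c : list (list (list nat)) -> R) (b : list (list (list nat)) -> nat -> R)
      (A : list (list (list nat)) -> nat -> nat -> R) :
  chain_avg f p hist (fun H => EQ d (c H) (b H) (A H)) =
  EQ d (chain_avg f p hist c) (fun i => chain_avg f p hist (fun H => b H i))
       (fun i j => chain_avg f p hist (fun H => A H i j)).
Proof.
  unfold EQ. rewrite !chain_avg_add, !chain_avg_sig. f_equal. f_equal.
  apply sig_ext. intros; apply chain_avg_sig.
Qed.

Section Final.
Variables n : nat.
Hypothesis Hn : (3 <= n)%nat.

Definition Inv (f : nat) (p : Defs.partition) (hist : list Defs.partition) : Prop :=
  Pinv f p /\ (S f <= n)%nat /\ length hist = (n - S f)%nat /\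
  (forall t, (t < length (p :: hist))%nat -> length (nth t (p :: hist) []) = (S f + t)%nat) /\
  (forall t x, (S t < length (p :: hist))%nat -> singleton_in x (nth t (p :: hist) []) = true ->
        singleton_in x (nth (S t) (p :: hist) []) = true).

Lemma Inv_step f p hist ij : Inv (S f) p hist -> In ij (pairs (length p)) ->
  Inv f (merge p (fst ij) (snd ij)) (p :: hist).
Proof.
  intros [HP [Hf [Hl [Hlen Hmono]]]] Hij.
  assert (HP' := Pinv_merge f p ij HP Hij).
  assert (Hab := pairs_in _ _ Hij).
  split; [auto|]. split; [lia|]. split; [simpl; lia|]. split.
  - intros t Ht. destruct t as [|t].
    + destruct HP' as [Hl' _]. change (length (merge p (fst ij) (snd ij)) = (S f + 0)%nat). lia.
    + simpl. simpl in Ht. specialize (Hlen t). simpl in Hlen. rewrite Hlen by lia. lia.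
  - intros t x Ht Hs. destruct t as [|t].
    + simpl in *. destruct ij as [a b]. eapply singleton_merge; eauto.
    + simpl. apply Hmono; [simpl in *; lia|]. exact Hs.
Qed.

Lemma Inv_final p hist : Inv 0 p hist -> ValidH n (p :: hist).
Proof.
  intros [HP [Hf [Hl [Hlen Hmono]]]].
  assert (Hl' : length (p :: hist) = n) by (simpl; lia).
  split; [auto|]. split.
  - intros t Ht. rewrite Hlen by lia. lia.
  - intros t x Ht Hs. apply Hmono; auto. lia.
Qed.

Definition p0 : Defs.partition := map (fun i => [i]) (seq 1 n).

Lemma concat_p0 l : concat (map (fun i : nat => [i]) l) = l.
Proof. induction l; simpl; auto. rewrite IHl. auto. Qed.

Lemma Inv_init : Inv (n - 1) p0 [].
Proof.
  unfold Inv, Pinv, p0. rewrite length_map, length_seq, concat_p0.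
  split; [split; [lia|split]|].
  - apply seq_NoDup.
  - intros bl Hbl. apply in_map_iff in Hbl. destruct Hbl as [x [<- _]]. discriminate.
  - split; [lia|]. split; [simpl; lia|]. split.
    + intros t Ht. simpl in Ht. destruct t; [|lia]. simpl. rewrite length_map, length_seq. lia.
    + intros t x Ht. simpl in Ht. lia.
Qed.

Lemma Yc_p0 : Yc n p0 = INR n.
Proof.
  unfold Yc. rewrite (sumR_map_ext _ (fun _ => 1)).
  - rewrite sumR_const, length_seq. ring.
  - intros i Hi. unfold b2r. replace (singleton_in i p0) with true; auto.
    symmetry. rewrite singleton_in_eq. apply existsb_exists. exists [i]. split.
    + unfold p0. apply (in_map (fun i : nat => [i])). auto.
    + simpl. apply Nat.eqb_refl.
Qed.

Variable m : nat.
Hypothesis Hm : (1 <= m <= n)%nat.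

Definition bc (H : list Defs.partition) (i : nat) : R := w m (S (S i)) * Yc n (nth (S i) H []).

Lemma SH_valid H : ValidH n H -> SH n m H = sig (bc H) (n - 1).
Proof.
  intros [Hl [Hlen _]]. unfold SH. rewrite (sumR_map_nth _ _ []). rewrite Hl.
  replace n with (S (n - 1)) at 1 by lia. rewrite sig_shift.
  rewrite Hlen by lia. unfold w at 1. replace (Nat.ltb m 1) with false by (symmetry; apply Nat.ltb_ge; lia).
  rewrite Rmult_0_l, Rplus_0_l. apply sig_ext. intros i Hi. rewrite Hlen by lia. reflexivity.
Qed.

Lemma QH_valid H : ValidH n H -> QH n m H = sig (fun i => bc H i ^ 2) (n - 1).
Proof.
  intros [Hl [Hlen _]]. unfold QH. rewrite (sumR_map_nth _ _ []). rewrite Hl.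
  replace n with (S (n - 1)) at 1 by lia. rewrite sig_shift.
  rewrite Hlen by lia. unfold w at 1. replace (Nat.ltb m 1) with false by (symmetry; apply Nat.ltb_ge; lia).
  replace ((0 * Yc n (nth 0 H [])) ^ 2) with 0 by ring. rewrite Rplus_0_l.
  apply sig_ext. intros i Hi. rewrite Hlen by lia. reflexivity.
Qed.

Lemma coal_ext (F G : list Defs.partition -> R) :
  (forall H, ValidH n H -> F H = G H) -> coalescent_avg n F = coalescent_avg n G.
Proof.
  intros HFG. unfold coalescent_avg. apply (chain_avg_ext_inv Inv).
  - intros; apply Inv_step; auto.
  - intros p hist Hi. apply HFG. apply Inv_final; auto.
  - apply Inv_init.
Qed.

Lemma chain_mean : coalescent_avg n (fun H => SH n m H) = alphaC m n * INR n.
Proof.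
  unfold coalescent_avg. fold p0.
  rewrite (chain_avg_ext _ _ _ _ (fun H => SH n m H + 0)) by (intros; ring).
  rewrite claim1 by (apply Inv_init). rewrite Yc_p0.
  replace (S (n - 1)) with n by lia. unfold SH, sumR. simpl. ring.
Qed.

Lemma chain_var mu : coalescent_avg n (fun H => (SH n m H + - mu) ^ 2 + QH n m H) =
  mu ^ 2 - 2 * mu * alphaC m n * INR n + beta m n * INR n ^ 2 + gamma m n * INR n.
Proof.
  unfold coalescent_avg. fold p0.
  rewrite claim2 by (apply Inv_init). rewrite Yc_p0.
  replace (S (n - 1)) with n by lia. unfold SH, QH, sumR. simpl. ring.
Qed.

Lemma moments (L : list Defs.partition -> list R -> R) :
  (forall H es, ValidH n H -> Forall (Rle 0) es -> L H es = sig (fun idx => nth idx es 0 * bc H idx) (n - 1)) ->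
  exp_expect (n - 1) (fun es => coalescent_avg n (fun H => L H es)) (alphaC m n * INR n) /\
  forall mu, exp_expect (n - 1) (fun es => coalescent_avg n (fun H => (L H es - mu) ^ 2))
    (mu ^ 2 - 2 * mu * alphaC m n * INR n + beta m n * INR n ^ 2 + gamma m n * INR n).
Proof.
  intros HL. split.
  - rewrite <- chain_mean.
    replace (coalescent_avg n (fun H => SH n m H)) with
      (EQ (n - 1) (coalescent_avg n (fun _ => 0)) (fun i => coalescent_avg n (fun H => bc H i))
          (fun i j => coalescent_avg n (fun _ => 0))).
    + apply ee_quad. intros xs Hl Hx. unfold coalescent_avg. rewrite <- chain_evalQ.
      fold (coalescent_avg n (fun H => L H xs)).
      fold (coalescent_avg n (fun H => evalQ (n - 1) 0 (bc H) (fun _ _ => 0) xs)).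
      apply coal_ext. intros H HV. rewrite HL by auto. unfold evalQ.
      rewrite (sig_ext (fun i => sig (fun j => 0 * nth i xs 0 * nth j xs 0) (n - 1)) (fun _ => 0)).
      2:{ intros. rewrite (sig_ext _ (fun _ => 0)) by (intros; ring). apply sig_zero. }
      rewrite sig_zero. rewrite Rplus_0_r, Rplus_0_l. apply sig_ext. intros; ring.
    + unfold coalescent_avg. rewrite <- chain_EQ.
      fold (coalescent_avg n (fun H => EQ (n - 1) 0 (bc H) (fun _ _ => 0))).
      fold (coalescent_avg n (fun H => SH n m H)).
      apply coal_ext. intros H HV. rewrite SH_valid by auto. unfold EQ.
      rewrite (sig_ext (fun i => sig (fun j => 0) (n - 1)) (fun _ => 0)) by (intros; apply sig_zero).
      rewrite !sig_zero. ring.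
  - intros mu. rewrite <- chain_var.
    replace (coalescent_avg n (fun H => (SH n m H + - mu) ^ 2 + QH n m H)) with
      (EQ (n - 1) (coalescent_avg n (fun _ => mu ^ 2)) (fun i => coalescent_avg n (fun H => -2 * mu * bc H i))
          (fun i j => coalescent_avg n (fun H => bc H i * bc H j))).
    + apply ee_quad. intros xs Hl Hx. unfold coalescent_avg. rewrite <- chain_evalQ.
      fold (coalescent_avg n (fun H => (L H xs - mu) ^ 2)).
      fold (coalescent_avg n (fun H => evalQ (n - 1) (mu ^ 2) (fun i => -2 * mu * bc H i) (fun i j => bc H i * bc H j) xs)).
      apply coal_ext. intros H HV. rewrite HL by auto. unfold evalQ.
      rewrite (sig_ext (fun i => -2 * mu * bc H i * nth i xs 0) (fun i => (-2 * mu) * (nth i xs 0 * bc H i))) by (intros; ring).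
      rewrite sig_scal.
      rewrite (sig_ext (fun i => sig (fun j => bc H i * bc H j * nth i xs 0 * nth j xs 0) (n - 1))
                 (fun i => sig (fun j => (nth i xs 0 * bc H i) * (nth j xs 0 * bc H j)) (n - 1))).
      2:{ intros. apply sig_ext. intros; ring. }
      rewrite <- sig_sq. ring.
    + unfold coalescent_avg. rewrite <- chain_EQ.
      fold (coalescent_avg n (fun H => EQ (n - 1) (mu ^ 2) (fun i => -2 * mu * bc H i) (fun i j => bc H i * bc H j))).
      fold (coalescent_avg n (fun H => (SH n m H + - mu) ^ 2 + QH n m H)).
      apply coal_ext. intros H HV. rewrite SH_valid, QH_valid by auto. unfold EQ.
      rewrite sig_scal. rewrite <- sig_sq. rewrite (sig_ext (fun i => bc H i ^ 2) (fun i => bc H i * bc H i)) by (intros; ring). ring.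
Qed.

End Final.

Lemma final_alg (nn mm : nat) : (3 <= nn)%nat -> (1 <= mm <= nn)%nat ->
  alphaC mm nn * INR nn = 2 * (INR nn - INR mm) / (INR nn - 1) /\
  forall mu, mu = 2 * (INR nn - INR mm) / (INR nn - 1) ->
    mu ^ 2 - 2 * mu * alphaC mm nn * INR nn + beta mm nn * INR nn ^ 2 + gamma mm nn * INR nn
    = 8 * T1 mm nn / ((INR nn - 1) * (INR nn - 2)) + 8 * T2 mm nn / (INR nn - 1) - mu ^ 2.
Proof.
  intros Hn Hm.
  destruct (closed mm ltac:(lia) (nn - mm)) as [HA [HG HT]].
  replace (mm + (nn - mm))%nat with nn in * by lia.
  assert (H3 : 3 <= INR nn) by (replace 3 with (INR 3) by (simpl; ring); apply le_INR; auto).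
  assert (N0 : INR nn <> 0) by lra. assert (N1 : INR nn - 1 <> 0) by lra. assert (N2 : INR nn - 2 <> 0) by lra.
  assert (Ea : alphaC mm nn = 2 * (INR nn - INR mm) / (INR nn * (INR nn - 1))).
  { rewrite <- HA. field. auto. }
  assert (Eb : beta mm nn = 8 * T1 mm nn / (INR nn * (INR nn - 1) ^ 2 * (INR nn - 2))).
  { rewrite <- HG. field. auto. }
  assert (Eg : gamma mm nn = 8 * T2 mm nn / (INR nn * (INR nn - 1)) - beta mm nn).
  { rewrite <- HT. field. auto. }
  split.
  - rewrite Ea. field. auto.
  - intros mu ->. rewrite Eg, Eb, Ea. field. auto.
Qed.

Theorem proposition5 (n : nat) (alpha : R) :
  (3 <= n)%nat -> 0 <= alpha <= 1 ->
  let m := nfloor (Rpower (INR n) alpha) in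
  let mu := 2 * (INR n - INR m) / (INR n - 1) in
  exp_expect (n - 1) (fun es => coalescent_avg n (fun H => Lhat n alpha 1 H es)) mu
  /\ exp_expect (n - 1)
       (fun es => coalescent_avg n (fun H => (Lhat n alpha 1 H es - mu) ^ 2))
       (8 * (harm (n - 1) - harm (m - 1)) * (INR n + 2 * INR m - 2)
          / ((INR n - 1) * (INR n - 2))
        - 4 * (INR n - INR m) * (4 * INR n + INR m - 5)
          / ((INR n - 1) ^ 2 * (INR n - 2)))
  /\ exp_expect (n - 1) (fun es => coalescent_avg n (fun H => Lext n H es)) 2
  /\ exp_expect (n - 1)
       (fun es => coalescent_avg n (fun H => (Lext n H es - 2) ^ 2))
       ((8 * INR n * harm n - 16 * INR n + 8) / ((INR n - 1) * (INR n - 2))).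
Proof.
  intros Hn Ha m mu.
  assert (Hmdef : nfloor (Rpower (INR n) alpha) = m) by reflexivity.
  assert (Hmu : mu = 2 * (INR n - INR m) / (INR n - 1)) by reflexivity.
  clearbody m mu.
  assert (Hmb : (1 <= m <= n)%nat).
  { rewrite <- Hmdef. destruct (Rpower_bounds n alpha ltac:(lia) Ha). apply nfloor_bounds; auto. }
  assert (H3 : 3 <= INR n) by (replace 3 with (INR 3) by (simpl; ring); apply le_INR; auto).
  assert (N0 : INR n <> 0) by lra. assert (N1 : INR n - 1 <> 0) by lra. assert (N2 : INR n - 2 <> 0) by lra.
  assert (Hhn : harm n = harm (n - 1) + / INR n).
  { replace n with (S (n - 1)) at 1 by lia. rewrite harm_S. replace (S (n - 1)) with n by lia. reflexivity. }
  destruct (moments n ltac:(lia) m Hmb (fun H es => Lhat n alpha 1 H es)) as [M1 M2].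
  { intros H es HV Hes. apply Lhat_eq; auto. lia. }
  destruct (final_alg n m Hn Hmb) as [F1 F2].
  destruct (moments n ltac:(lia) 1 ltac:(lia) (fun H es => Lext n H es)) as [M3 M4].
  { intros H es HV Hes. apply Lext_eq; auto. lia. }
  destruct (final_alg n 1 Hn ltac:(lia)) as [F3 F4].
  split; [|split; [|split]].
  - rewrite Hmu, <- F1. exact M1.
  - specialize (M2 mu). rewrite (F2 mu Hmu) in M2.
    match goal with |- exp_expect _ _ ?V => replace V with
      (8 * T1 m n / ((INR n - 1) * (INR n - 2)) + 8 * T2 m n / (INR n - 1) - mu ^ 2); [exact M2|] end.
    assert (Hm0 : INR m <> 0) by (apply not_0_INR; lia).
    assert (Hhm : harm m = harm (m - 1) + / INR m).
    { replace m with (S (m - 1)) at 1 by lia. rewrite harm_S. replace (S (m - 1)) with m by lia. reflexivity. }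
    unfold T1, T2. rewrite Hhn, Hhm, Hmu. field. auto.
  - assert (E3 : alphaC 1 n * INR n = 2) by (rewrite F3; simpl INR; field; auto).
    rewrite E3 in M3. exact M3.
  - specialize (M4 2). rewrite (F4 2) in M4.
    2:{ simpl INR. field. auto. }
    match goal with |- exp_expect _ _ ?V => replace V with
      (8 * T1 1 n / ((INR n - 1) * (INR n - 2)) + 8 * T2 1 n / (INR n - 1) - 2 ^ 2); [exact M4|] end.
    unfold T1, T2. replace (harm (1 - 1)) with 0 by reflexivity. replace (harm 1) with 1 by (simpl; field).
    simpl INR. field. auto.
Qed.
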